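(* Let $\Gamma$ be a metrized graph and let $p,q,s,t,u\in\Gamma$ with $p\neq q$. Then $$j_u(t,s)=j_u^{\Gamma_{pq}}(t,s)+\frac{\big(j_p(q,t)-j_p(q,u)\big)^2+\big(j_p(q,s)-j_p(q,u)\big)^2-\big(j_p(q,t)-j_p(q,s)\big)^2}{2r(p,q)}$$ $$=j_u^{\Gamma_{pq}}(t,s)+\frac{1}{r(p,q)}\big(j_p(q,u)-j_p(q,t)\big)\big(j_p(q,u)-j_p(q,s)\big).$$
   Context: A metrized graph $\Gamma$ is a finite connected graph (multiple edges and self-loops allowed) in which each edge is identified with a closed line segment of positive length. $\Gamma$ is regarded as a resistive electric circuit in which each edge is a resistor whose resistance equals its length. $r(x,y)$ is the effective resistance between $x$ and $y$; $j_z(x,y)$ is the voltage at $x$ when a unit current enters at $y$ and exits at $z$, with reference voltage $0$ at $z$. $\Gamma_{pq}$ is the metrized graph obtained from $\Gamma$ by identifying $p$ and $q$, and $j^{\Gamma_{pq}}$ is its voltage function. *)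

(* Defs.v *)
From mathcomp Require Import all_boot all_order all_algebra.
From mathcomp Require Import reals.
From Stdlib Require Import ClassicalEpsilon.
Unset Printing Implicit Defensive.
Import Order.TTheory GRing.Theory Num.Theory.
Local Open Scope ring_scope.

(* A model of a metrized graph: finitely many vertices, finitely many edges
   (multiple edges and self-loops allowed), each edge e joining src G e and
   tgt G e and being a resistor of resistance (length) len G e. *)
Record mgraph (R : realType) := MGraph {
  V : finType;
  E : finType;
  src : E -> V;
  tgt : E -> V;
  len : E -> R }.
Arguments V {R}. Arguments E {R}. Arguments src {R} G : rename. Arguments tgt {R} G : rename.
Arguments len {R} G : rename. Arguments MGraph {R}.

Definition adj {R} (G : mgraph R) : rel (V G) := fun x y =>
  [exists e : E G, ((src G e == x) && (tgt G e == y)) || ((src G e == y) && (tgt G e == x))].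

Definition is_metrized {R} (G : mgraph R) : Prop :=
  (forall e : E G, 0 < len G e) /\ (forall x y : V G, connect (adj G) x y).

Definition outflow {R} (G : mgraph R) (f : V G -> R) (v : V G) : R :=
  \sum_(e : E G)
    ((if src G e == v then (f v - f (tgt G e)) / len G e else 0) +
     (if tgt G e == v then (f v - f (src G e)) / len G e else 0)).

(* f is the potential when a unit current enters at y and exits at z,
   with reference voltage 0 at z (Kirchhoff's laws). *)
Definition is_voltage {R} (G : mgraph R) (z y : V G) (f : V G -> R) : Prop :=
  f z = 0 /\
  forall v, outflow G f v = (if v == y then 1 else 0) - (if v == z then 1 else 0).

(* j_z(x,y) : voltage at x, unit current entering at y and exiting at z,
   reference voltage 0 at z. *)
Definition jv {R} (G : mgraph R) (z x y : V G) : R :=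
  (epsilon (inhabits (fun _ : V G => 0 : R)) (is_voltage G z y)) x.

(* effective resistance r(x,y) = voltage difference between x and y when a
   unit current enters at x and exits at y, i.e. j_y(x,x). *)
Definition reff {R} (G : mgraph R) (x y : V G) : R := jv G y x x.

(* Gamma_pq : identify q with p.  Vertex set: V minus q, with q sent to p. *)
Definition gV {R} {G : mgraph R} (q : V G) : finType := {v : V G | v != q}.

Definition gmap {R} {G : mgraph R} {p q : V G} (hpq : p != q) (v : V G) : gV q :=
  insubd (exist (fun w => w != q) p hpq) v.

Definition glue {R} {G : mgraph R} {p q : V G} (hpq : p != q) : mgraph R :=
  MGraph (gV q) (E G) (fun e => gmap hpq (src G e)) (fun e => gmap hpq (tgt G e))
    (len G).

(* Main.v *)
Require Import Defs.
From HB Require Import structures.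
From mathcomp Require Import all_boot all_order all_algebra.
From mathcomp Require Import reals ring lra.
From Stdlib Require Import ClassicalEpsilon FunctionalExtensionality.
Import Order.TTheory GRing.Theory Num.Theory.
Local Open Scope ring_scope.

Section S.
Variable R : realType.

Definition dl {T : eqType} (a v : T) : R := if v == a then 1 else 0.

Lemma sum_ifeq (T : finType) (h : T -> R) x : \sum_v (if x == v then h v else 0) = h x.
Proof. rewrite -big_mkcond /=. under eq_bigl do rewrite eq_sym. by rewrite big_pred1_eq. Qed.

Lemma sum_gdl (T : finType) (g : T -> R) a : \sum_v g v * dl a v = g a.
Proof.
rewrite /dl. under eq_bigr => v _ do rewrite (fun_if (fun x => g v * x)) mulr1 mulr0 eq_sym.
exact: sum_ifeq.
Qed.

Lemma sum_dl (T : finType) (a : T) : \sum_v dl a v = 1.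
Proof. have := @sum_gdl T (fun _ => 1) a. by under eq_bigr do rewrite mul1r. Qed.

Lemma green (G : mgraph R) (f g : V G -> R) :
  \sum_v g v * outflow G f v =
  \sum_e (f (src G e) - f (tgt G e)) * (g (src G e) - g (tgt G e)) / len G e.
Proof.
rewrite /outflow. under eq_bigr => v _ do rewrite mulr_sumr. rewrite exchange_big /=.
apply: eq_bigr => e _.
under eq_bigr => v _ do rewrite mulrDr !(fun_if (fun x => g v * x)) !mulr0.
rewrite big_split /= !sum_ifeq. ring.
Qed.

Lemma outflow_ext (G : mgraph R) (f g : V G -> R) v : f =1 g -> outflow G f v = outflow G g v.
Proof. by move=> H; rewrite (functional_extensionality f g H). Qed.

Lemma outflow_comb (G : mgraph R) (f g : V G -> R) a b k v :
  outflow G (fun w => a * f w + b * g w + k) v = a * outflow G f v + b * outflow G g v.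
Proof.
rewrite /outflow !mulr_sumr -big_split /=. apply: eq_bigr => e _.
by case: ifP => _; case: ifP => _; ring.
Qed.

Lemma outflow_cst (G : mgraph R) c v : outflow G (fun _ => c) v = 0.
Proof.
rewrite /outflow big1 // => e _. by rewrite subrr mul0r !if_same addr0.
Qed.

Lemma sum_outflow (G : mgraph R) f : \sum_v outflow G f v = 0.
Proof.
have := green G f (fun _ => 1). under eq_bigr do rewrite mul1r. move=> ->.
by rewrite big1 // => e _; rewrite subrr mulr0 mul0r.
Qed.

Lemma connect_hom (T T' : finType) (e : rel T) (e' : rel T') (h : T -> T') :
  (forall x y, e x y -> e' (h x) (h y)) -> forall x y, connect e x y -> connect e' (h x) (h y).
Proof.
move=> H x y /connectP [pt]; elim: pt x => [|z pt IH] x /=; first by move=> _ ->.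
case/andP => exz pz ey. apply: connect_trans (connect1 (H _ _ exz)) _. exact: IH pz ey.
Qed.

Lemma connect_eq (T : finType) (e : rel T) (f : T -> R) :
  (forall x y, e x y -> f x = f y) -> forall x y, connect e x y -> f x = f y.
Proof.
move=> H x y /connectP [pt]; elim: pt x => [|z pt IH] x /=; first by move=> _ ->.
case/andP => exz pz ey. rewrite (H _ _ exz). exact: IH pz ey.
Qed.

Lemma energy0 (G : mgraph R) (hG : is_metrized G) (f : V G -> R) :
  \sum_e (f (src G e) - f (tgt G e)) * (f (src G e) - f (tgt G e)) / len G e = 0 ->
  forall x y, f x = f y.
Proof.
case: hG => hl hc Hs.
have H0 : forall e : E G, f (src G e) = f (tgt G e).
  have Hn : forall i : E G, predT i -> 0 <= (f (src G i) - f (tgt G i)) * (f (src G i) - f (tgt G i)) / len G i.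
    by move=> i _; apply: divr_ge0; [rewrite -expr2 sqr_ge0 | exact: ltW (hl i)].
  move=> e; have := psumr_eq0P (P := predT) (i := e) Hn Hs isT.
  move/eqP; rewrite mulf_eq0 invr_eq0 (gt_eqF (hl e)) orbF mulf_eq0 orbb subr_eq0.
  by move/eqP.
move=> x y; apply: (@connect_eq _ (adj G) f) (hc x y).
move=> a b /existsP [e /orP [/andP [/eqP <- /eqP <-] | /andP [/eqP <- /eqP <-]]] //.

Qed.

Lemma harmonic_cst (G : mgraph R) (hG : is_metrized G) (f : V G -> R) :
  (forall v, outflow G f v = 0) -> forall x y, f x = f y.
Proof.
move=> H; apply: energy0 => //. rewrite -green big1 // => v _. by rewrite H mulr0.
Qed.

Lemma voltage_uniq (G : mgraph R) (hG : is_metrized G) z y f1 f2 :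
  is_voltage G z y f1 -> is_voltage G z y f2 -> f1 = f2.
Proof.
move=> [h1z h1] [h2z h2]; apply: functional_extensionality => x.
have Hh : forall v, outflow G (fun w => 1 * f1 w + (-1) * f2 w + 0) v = 0.
  by move=> v; rewrite outflow_comb h1 h2; ring.
have := @harmonic_cst G hG _ Hh x z. rewrite /= h1z h2z => E; lra.
Qed.

End S.
Arguments dl {R T} a v.

Section Exist.
Variable R : realType.
Variable G : mgraph R.
Variable z : V G.
Local Notation n := #|V G|.

Definition v2f (x : 'rV[R]_n) : V G -> R := fun w => x 0 (enum_rank w).

Definition Mz (x : 'rV[R]_n) : 'rV[R]_n :=
  \row_j (outflow G (v2f x) (enum_val j) + (if z == enum_val j then v2f x z else 0)).

Lemma Mz_lin : linear Mz.
Proof.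
move=> a x y; apply/rowP => j; rewrite !mxE.
rewrite (@outflow_ext _ G _ (fun w => a * v2f x w + 1 * v2f y w + 0)); last first.
  by move=> w; rewrite /v2f !mxE mul1r addr0.
rewrite outflow_comb mul1r /v2f !mxE.
by case: ifP => _; ring.
Qed.

HB.instance Definition _ := GRing.isLinear.Build R 'rV[R]_n 'rV[R]_n *:%R Mz Mz_lin.

Hypothesis hG : is_metrized G.

Lemma Mz_ker x : Mz x = 0 -> x = 0.
Proof.
move=> H.
have Hw : forall w, outflow G (v2f x) w + (if z == w then v2f x z else 0) = 0.
  move=> w; have := congr1 (fun m : 'rV[R]_n => m 0 (enum_rank w)) H.
  by rewrite !mxE enum_rankK.
have Hz : v2f x z = 0.
  have := congr1 (fun F => \sum_(w : V G) F w) (functional_extensionality _ _ Hw).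
  rewrite /= big_split /= sum_outflow sum_ifeq add0r => ->; exact: big1.
have Hh : forall w, outflow G (v2f x) w = 0.
  by move=> w; have := Hw w; rewrite Hz if_same addr0.
apply/rowP => j; rewrite mxE.
have := @harmonic_cst _ G hG _ Hh (enum_val j) z.
by rewrite Hz /v2f enum_valK.
Qed.

Lemma exists_voltage y : exists f, is_voltage G z y f.
Proof.
pose L := linfun Mz.
have inj : injective L.
  move=> x1 x2; rewrite !lfunE /= => E; apply/eqP; rewrite -subr_eq0; apply/eqP.
  by apply: Mz_ker; rewrite linearB /= E subrr.
have kz : lker L == 0%VS by apply/lker0P.
have dimE : \dim (L @: fullv)%VS = \dim (@fullv R 'rV[R]_n).
  by apply: limg_dim_eq; rewrite (eqP kz) capv0.
have imF : (L @: fullv)%VS = fullv.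
  by apply/eqP; rewrite eqEdim subvf dimE leqnn.
pose b : 'rV[R]_n := \row_j (dl y (enum_val j) - dl z (enum_val j)).
have : b \in (L @: fullv)%VS by rewrite imF memvf.
case/memv_imgP => x _; rewrite lfunE /= => Hb.
exists (v2f x).
have Hw : forall w, outflow G (v2f x) w + (if z == w then v2f x z else 0) = dl y w - dl z w.
  move=> w; have := congr1 (fun m : 'rV[R]_n => m 0 (enum_rank w)) Hb.
  by rewrite !mxE enum_rankK => <-.
have Hz : v2f x z = 0.
  have := congr1 (fun F => \sum_(w : V G) F w) (functional_extensionality _ _ Hw).
  by rewrite /= big_split /= sum_outflow sum_ifeq add0r sumrB !sum_dl subrr.
split => // v. by have := Hw v; rewrite Hz if_same addr0.
Qed.

End Exist.

Section Main.
Variable R : realType.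

Definition volt (G : mgraph R) (z y : V G) : V G -> R :=
  epsilon (inhabits (fun _ : V G => 0 : R)) (is_voltage G z y).

Lemma volt_spec (G : mgraph R) (hG : is_metrized G) z y : is_voltage G z y (volt G z y).
Proof. exact: (epsilon_spec (inhabits (fun _ : V G => 0 : R)) (is_voltage G z y) (@exists_voltage R G z hG y)). Qed.

Lemma jvE (G : mgraph R) z x y : jv G z x y = volt G z y x.
Proof. by []. Qed.

Lemma sum_gif (T : finType) (g : T -> R) a :
  \sum_v g v * (if v == a then 1 else 0) = g a.
Proof. exact: sum_gdl. Qed.

Lemma recip (G : mgraph R) (hG : is_metrized G) z1 y1 z2 y2 :
  volt G z2 y2 y1 - volt G z2 y2 z1 = volt G z1 y1 y2 - volt G z1 y1 z2.
Proof.
set a := volt G z1 y1; set b := volt G z2 y2.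
have [az ha] := volt_spec G hG z1 y1; have [bz hb] := volt_spec G hG z2 y2.
have E1 : \sum_v b v * outflow G a v = b y1 - b z1.
  by under eq_bigr => v _ do rewrite ha mulrBr; rewrite sumrB !sum_gif.
have E2 : \sum_v a v * outflow G b v = a y2 - a z2.
  by under eq_bigr => v _ do rewrite hb mulrBr; rewrite sumrB !sum_gif.
rewrite -E1 -E2 !green; apply: eq_bigr => e _; ring.
Qed.

Lemma sum_comb4 (T : finType) (g : T -> R) a b c d k :
  \sum_v g v * (1 * (dl a v - dl b v) + k * (dl c v - dl d v)) = g a - g b + k * (g c - g d).
Proof.
rewrite (eq_bigr (fun v => (g v * dl a v - g v * dl b v) + k * (g v * dl c v - g v * dl d v))); last by move=> v _; ring.
by rewrite big_split /= sumrB -mulr_sumr sumrB !sum_gdl.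
Qed.

Section Glue.
Variables (G : mgraph R) (p q : V G) (hpq : p != q).

Lemma gmap_val (w : gV q) : gmap hpq (val w) = w.
Proof. by apply: val_inj; rewrite val_insubd (valP w). Qed.

Lemma gmap_qp : gmap hpq q = gmap hpq p.
Proof. by apply: val_inj; rewrite !val_insubd /= eqxx hpq. Qed.

Lemma glue_metrized : is_metrized G -> is_metrized (glue hpq).
Proof.
case=> hl hc; split; first exact: hl.
move=> w1 w2; rewrite -(gmap_val w1) -(gmap_val w2).
apply: (@connect_hom _ _ (adj G) (adj (glue hpq)) (gmap hpq)) (hc _ _).
move=> x y /existsP [e He]; apply/existsP; exists e; rewrite /=.
by case/orP: He => /andP [/eqP -> /eqP ->]; rewrite !eqxx ?orbT.
Qed.

Lemma outflow_glue (F : gV q -> R) w :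
  outflow (glue hpq) F w =
  \sum_v dl w (gmap hpq v) * outflow G (fun v => F (gmap hpq v)) v.
Proof.
transitivity (\sum_w' outflow (glue hpq) F w' * dl w w'); first by rewrite sum_gdl.
under eq_bigr do rewrite mulrC.
by rewrite !green.
Qed.
End Glue.
End Main.

Arguments volt {R} G z y.
Arguments volt_spec {R} G hG z y.
Arguments recip {R G} hG z1 y1 z2 y2.
Arguments jvE {R G} z x y.
Arguments green {R G} f g.
Arguments outflow_ext {R G} f g v _.
Arguments outflow_comb {R G} f g a b k v.
Arguments outflow_cst {R G} c v.
Arguments energy0 {R G} hG f _ x y.
Arguments voltage_uniq {R G} hG z y f1 f2 _ _.
Arguments sum_gif {R T} g a.
Arguments sum_gdl {R T} g a.
Arguments sum_comb4 {R T} g a b c d k.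
Arguments gmap_val {R G p q} hpq w.
Arguments gmap_qp {R G p q} hpq.
Arguments glue_metrized {R G p q} hpq _.
Arguments outflow_glue {R G p q} hpq F w.

Theorem theorem2p7 (R : realType) (G : mgraph R) (hG : is_metrized G)
    (p q s t u : V G) (hpq : p != q) :
  jv G u t s =
    jv (glue hpq) (gmap hpq u) (gmap hpq t) (gmap hpq s)
    + ((jv G p q t - jv G p q u) ^+ 2 + (jv G p q s - jv G p q u) ^+ 2
        - (jv G p q t - jv G p q s) ^+ 2) / (2 * reff G p q)
  /\
  jv G u t s =
    jv (glue hpq) (gmap hpq u) (gmap hpq t) (gmap hpq s)
    + (jv G p q u - jv G p q t) * (jv G p q u - jv G p q s) / reff G p q.
Proof.
set f := volt G u s; set h := volt G p q.
have [fu Lf] := volt_spec G hG u s; have [hp Lh] := volt_spec G hG p q.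
rewrite -/f in fu Lf; rewrite -/h in hp Lh.
have Hht : forall x, jv G p q x = h x.
  move=> x; have := recip hG p x p q; rewrite -/h hp (volt_spec G hG p x).1 jvE => E.
  by rewrite -[RHS]subr0 E subr0.
have Hr : reff G p q = h q.
  have := recip hG q p p q; rewrite -/h hp (volt_spec G hG q p).1 /reff jvE => E.
  by apply: oppr_inj; rewrite -sub0r -E sub0r.
have r0 : h q != 0.
  apply/eqP => hq0.
  have Hc := energy0 hG h.
  have Hc' : forall x y, h x = h y.
    apply: Hc; rewrite -green.
    by under eq_bigr => v _ do rewrite Lh mulrBr; rewrite sumrB !sum_gif hq0 hp subrr.
  have := Lh q; rewrite (outflow_ext h (fun _ => 0)); last by move=> w; rewrite (Hc' w p) hp.
  by rewrite outflow_cst eqxx eq_sym (negbTE hpq) subr0 => /esym/eqP; rewrite oner_eq0.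
have Rfq : f q - f p = h s - h u.
  by have := recip hG u s p q; rewrite -/f -/h => ->.
pose c := (f q - f p) / h q.
pose phi := fun w => f w - c * (h w - h u).
have phipq : phi q = phi p.
  rewrite /phi /c hp; field.
  exact: r0.
have phipi : forall v, phi (val (gmap hpq v)) = phi v.
  move=> v; rewrite val_insubd /=; case: ifP => // /negbFE /eqP ->.
  by rewrite phipq.
pose F := fun w : gV q => phi (val w).
have hGl := glue_metrized hpq hG.
have HF : is_voltage (glue hpq) (gmap hpq u) (gmap hpq s) F.
  split; first by rewrite /F phipi /phi fu subrr mulr0 subr0.
  move=> w; rewrite outflow_glue.
  have Ev : forall v, outflow G (fun v => F (gmap hpq v)) v =
      1 * (dl s v - dl u v) + (- c) * (dl q v - dl p v).
    move=> v; rewrite (outflow_ext _ (fun w => 1 * f w + (- c) * h w + c * h u)); last first.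
      by move=> x; rewrite /F phipi /phi; ring.
    by rewrite outflow_comb Lf Lh.
  under eq_bigr => v _ do rewrite Ev.
  rewrite sum_comb4 (gmap_qp hpq) subrr mulr0 addr0 /dl.
  by rewrite (eq_sym (gmap hpq s)) (eq_sym (gmap hpq u)).
have Hgl : jv (glue hpq) (gmap hpq u) (gmap hpq t) (gmap hpq s) = phi t.
  rewrite jvE (voltage_uniq hGl _ _ _ _ (volt_spec _ hGl _ _) HF).
  by rewrite /F phipi.
rewrite Hgl !Hht Hr jvE -/f /phi /c Rfq.
split; field; exact: r0.
Qed.
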